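(* Let $\lambda\in\mathbb C$ be such that the generalized Verma module $M^+_\lambda$ is irreducible, with generating vector $v_\lambda$. Let $\mathcal V$ be a $U\mathfrak g$-module and $w\in\mathcal V$. Then there is at most one element $z\in M^+_\lambda\check\otimes\mathcal V$ which is $U\mathfrak g$-invariant (i.e. $x\cdot z=0$ for all $x\in\mathfrak g$, with $\mathfrak g$ acting via the coproduct) and satisfies $z\in v_\lambda\otimes w+(U\mathfrak n_-)_{<0}\cdot v_\lambda\check\otimes\mathcal V$.
   Context: $\mathfrak g=\bigoplus_{i\in\mathbb Z}\mathfrak g_i$ is a $\mathbb Z$-graded complex Lie algebra with finite-dimensional components; $\mathfrak n_+=\bigoplus_{i>0}\mathfrak g_i$, $\mathfrak n_-=\bigoplus_{i<0}\mathfrak g_i$, $\mathfrak p_+=\mathfrak g_0\oplus\mathfrak n_+$. $\chi:\mathfrak g_0\to\mathbb C$ is a nonsingular character (Lie algebra homomorphism such that $(u,v)\mapsto\chi([u,v]_0)$ is a nondegenerate pairing $\mathfrak n_+\times\mathfrak n_-\to\mathbb C$, $x_0$ being the $\mathfrak g_0$-component). For $\lambda\in\mathbb C$, $\chi_\lambda=\lambda\chi$ is made a $\mathfrak p_+$-module by letting $\mathfrak n_+$ act by zero, and $M^+_\lambda=U\mathfrak g\otimes_{U\mathfrak p_+}\chi_\lambda$ is the generalized Verma module with generating vector $v_\lambda=1\otimes1$; $M^+_\lambda$ is a free $U\mathfrak n_-$-module on $v_\lambda$ and is graded by $(M^+_\lambda)_{-n}=(U\mathfrak n_-)_{-n}v_\lambda$.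 For a $\mathbb Z$-graded $U\mathfrak g$-module $M$ and any $U\mathfrak g$-module $V$, the completed tensor product is $M\check\otimes V=\prod_i M_i\otimes V$ (formal infinite sums of homogeneous components), with $U\mathfrak g$ acting via the coproduct $\Delta(x)=x\otimes1+1\otimes x$, $x\in\mathfrak g$. *)

(* Defs.v *)
From HB Require Import structures.
From mathcomp Require Import all_boot all_algebra complex reals.
Set Implicit Arguments. Unset Strict Implicit. Unset Printing Implicit Defensive.
Import GRing.Theory.
Local Open Scope ring_scope.

Section Defs.
Variable K : fieldType.

Definition inspan (V : lmodType K) (s : seq V) (x : V) : Prop :=
  exists c : 'I_(size s) -> K, x = \sum_(j < size s) c j *: s`_j.

Record lieAlgebra := LieAlgebra {
  lie_car :> lmodType K;
  lie_br : lie_car -> lie_car -> lie_car;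
  lie_brDl : forall x y z, lie_br (x + y) z = lie_br x z + lie_br y z;
  lie_brZl : forall a x y, lie_br (a *: x) y = a *: lie_br x y;
  lie_br_alt : forall x, lie_br x x = 0;
  lie_jacobi : forall x y z,
    lie_br x (lie_br y z) + lie_br y (lie_br z x) + lie_br z (lie_br x y) = 0 }.

(* Z-graded Lie algebras g = (+)_i g_i with finite-dimensional components,
   given by the family of projections gl_pr i : g -> g_i of the direct sum *)
Record gradedLie := GradedLie {
  gl_lie :> lieAlgebra;
  gl_pr : int -> gl_lie -> gl_lie;
  gl_prD : forall i x y, gl_pr i (x + y) = gl_pr i x + gl_pr i y;
  gl_prZ : forall i a x, gl_pr i (a *: x) = a *: gl_pr i x;
  gl_prK : forall i j x, gl_pr i (gl_pr j x) = if i == j then gl_pr j x else 0;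
  gl_decomp : forall x, exists s : seq int,
     [/\ uniq s, (forall i, i \notin s -> gl_pr i x = 0) & x = \sum_(i <- s) gl_pr i x];
  gl_br_homog : forall i j x y, gl_pr i x = x -> gl_pr j y = y ->
     gl_pr (i + j) (lie_br x y) = lie_br x y;
  gl_findim : forall i, exists s : seq gl_lie, forall x, gl_pr i x = x -> inspan s x }.

Section Graded.
Variable g : gradedLie.

Definition homog (i : int) (x : g) : Prop := gl_pr i x = x.
Definition inNp (x : g) : Prop := forall i : int, i <= 0 -> gl_pr i x = 0.
Definition inNm (x : g) : Prop := forall i : int, 0 <= i -> gl_pr i x = 0.

(* chi : g_0 -> K a nonsingular character; chi is encoded as a function on g
   factoring through the projection onto g_0 *)
Definition nonsingular_character (chi : g -> K) : Prop :=
  [/\ forall a x y, chi (a *: x + y) = a * chi x + chi y,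
      forall x, chi x = chi (gl_pr 0 x),
      forall u v, homog 0 u -> homog 0 v -> chi (lie_br u v) = 0,
      forall u, inNp u -> (forall v, inNm v -> chi (gl_pr 0 (lie_br u v)) = 0) -> u = 0 &
      forall v, inNm v -> (forall u, inNp u -> chi (gl_pr 0 (lie_br u v)) = 0) -> v = 0].

Record gModule := GModule {
  gm_car :> lmodType K;
  gm_act : g -> gm_car -> gm_car;
  gm_actDl : forall x y m, gm_act (x + y) m = gm_act x m + gm_act y m;
  gm_actZl : forall a x m, gm_act (a *: x) m = a *: gm_act x m;
  gm_actDr : forall x m n, gm_act x (m + n) = gm_act x m + gm_act x n;
  gm_actZr : forall a x m, gm_act x (a *: m) = a *: gm_act x m;
  gm_act_br : forall x y m,
    gm_act (lie_br x y) m = gm_act x (gm_act y m) - gm_act y (gm_act x m) }.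

(* w spans a copy of the p_+-module chi_lam *)
Definition hw_vector (chi : g -> K) (lam : K) (W : gModule) (w : W) : Prop :=
  (forall x, inNp x -> gm_act x w = 0) /\
  (forall h, homog 0 h -> gm_act h w = (lam * chi h) *: w).

Definition gHom (M W : gModule) (f : M -> W) : Prop :=
  (forall a m n, f (a *: m + n) = a *: f m + f n) /\
  (forall x m, f (gm_act x m) = gm_act x (f m)).

(* (M, v) is the generalized Verma module U g (x)_{U p_+} chi_lam with
   generating vector v = 1 (x) 1, given by its defining universal property
   (Hom_g(U g (x)_{U p+} chi_lam, W) = Hom_{p+}(chi_lam, W)). *)
Definition is_gen_verma (chi : g -> K) (lam : K) (M : gModule) (v : M) : Prop :=
  hw_vector chi lam v /\
  forall (W : gModule) (w : W), hw_vector chi lam w ->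
    exists f : M -> W,
      [/\ gHom f, f v = w & forall f', gHom f' -> f' v = w -> forall m, f' m = f m].

Definition submodule (M : gModule) (S : M -> Prop) : Prop :=
  [/\ S 0, (forall a m n, S m -> S n -> S (a *: m + n)) &
      (forall x m, S m -> S (gm_act x m))].

Definition irreducible (M : gModule) : Prop :=
  (exists m : M, m <> 0) /\
  forall S, submodule S -> (exists m, S m /\ m <> 0) -> forall m : M, S m.

Section Verma.
Variables (M : gModule) (v : M).

(* unm_mono n m : m = x_1 ... x_k v with x_j \in g_{-d_j}, d_j > 0,
   sum d_j = n, i.e. m is a monomial of (U n_-)_{-n} applied to v *)
Inductive unm_mono : nat -> M -> Prop :=
| unm_mono0 : unm_mono 0 v
| unm_monoS : forall (d n : nat) (x : g) (m : M), (0 < d)%N ->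
    homog (- (d%:Z)) x -> unm_mono n m -> unm_mono (n + d) (gm_act x m).

(* the graded component M_{-n} = (U n_-)_{-n} v *)
Definition Mdeg (n : nat) (m : M) : Prop :=
  exists s : seq M, (forall y, y \in s -> unm_mono n y) /\ inspan s m.

Variable V : gModule.

(* Elements of M (x) V are represented by finite lists of pure tensors
   [:: (m_1, w_1); ...] standing for sum_j m_j (x) w_j; two such are equal
   in M (x) V iff they agree under every f (x) id, f a linear functional on M. *)
Definition lin_functional (f : M -> K) : Prop :=
  forall a x y, f (a *: x + y) = a * f x + f y.
Definition tens_eval (f : M -> K) (t : seq (M * V)) : V :=
  \sum_(p <- t) f p.1 *: p.2.
Definition tens_eq (t1 t2 : seq (M * V)) : Prop :=
  forall f, lin_functional f -> tens_eval f t1 = tens_eval f t2.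

(* An element z of the completed tensor product M (x)^ V = prod_n M_{-n} (x) V
   is a family n |-> z n, with z n \in M_{-n} (x) V the degree -n component. *)
Definition in_ctens (z : nat -> seq (M * V)) : Prop :=
  forall n p, p \in z n -> Mdeg n p.1.

Definition zc (z : nat -> seq (M * V)) (k : int) : seq (M * V) :=
  match k with
  | Posz 0 => z 0%N
  | Posz _ => [::]
  | Negz n => z n.+1
  end.

(* degree k component of x . z = (x (x) 1 + 1 (x) x) z, where s is a finite
   list of degrees outside of which the homogeneous components of x vanish *)
Definition act_comp (x : g) (s : seq int) (z : nat -> seq (M * V)) (k : int)
  : seq (M * V) :=
  flatten [seq [seq (gm_act (gl_pr i x) p.1, p.2) | p <- zc z (k - i)] | i <- s]
  ++ [seq (p.1, gm_act x p.2) | p <- zc z k].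

Definition ctens_invariant (z : nat -> seq (M * V)) : Prop :=
  forall (x : g) (s : seq int), uniq s -> (forall i, i \notin s -> gl_pr i x = 0) ->
    forall k : int, tens_eq (act_comp x s z k) [::].

(* z \in v (x) w + (U n_-)_{<0} v (x)^ V : its degree-0 component is v (x) w *)
Definition leading_term (w : V) (z : nat -> seq (M * V)) : Prop :=
  tens_eq (z 0%N) [:: (v, w)].

End Verma.
End Graded.
End Defs.

(* Main.v *)
Require Import Defs.
From HB Require Import structures.
From mathcomp Require Import all_boot all_algebra complex reals.
From mathcomp Require Import all_order boolp classical_sets zify.
Import GRing.Theory.
Local Open Scope ring_scope.

Module Aux.
Set Implicit Arguments. Unset Strict Implicit. Unset Printing Implicit Defensive.
Import Order.TTheory Num.Theory.

Section Sep.
Variables (K : fieldType) (W : lmodType K).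
Definition linf (f : W -> K) := forall a x y, f (a *: x + y) = a * f x + f y.

Lemma sep (y : W) : (forall f, linf f -> f y = 0) -> y = 0.
Proof.
move=> Hf; apply: contrapT => ny.
pose P := fun A : set W => (forall a x z, A x -> A z -> A (a *: x + z)) /\ ~ A y.
have [A [[Acl Ay] Amax]] : exists A, P A /\ forall B, (A `<` B)%classic -> ~ P B.
  apply: Zorn_bigcup => F FP Ftot; split.
    move=> a x z [X FX Xx] [Z FZ Zz].
    have [XZ|ZX] := Ftot X Z FX FZ.
      exists Z => //; apply: (proj1 (FP Z FZ)) => //; exact: XZ.
    exists X => //; apply: (proj1 (FP X FX)) => //; exact: ZX.
  by move=> [X FX Xy]; exact: (proj2 (FP X FX)).
have A0 : A 0.
  apply: contrapT => nA0.
  apply: (Amax [set 0]%classic); last first.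
    split; first by move=> a x z -> ->; rewrite scaler0 addr0.
    by move=> /= E; apply: ny.
  split; first by move=> x Ax; exfalso; apply: nA0; have := Acl (-1) x x Ax Ax;
    rewrite scaleN1r addNr.
  by move=> /(_ 0 erefl).
have Adecomp : forall u, exists c, A (u - c *: y).
  move=> u; apply: contrapT => nu.
  pose B := fun t : W => exists h c, A h /\ t = h + c *: u.
  apply: (Amax B); last first.
    split.
      move=> a x z [h1 [c1 [Ah1 ->]]] [h2 [c2 [Ah2 ->]]].
      exists (a *: h1 + h2), (a * c1 + c2); split; first exact: Acl.
      by rewrite scalerDr scalerDl scalerA addrACA.
    move=> [h [c [Ah yE]]].
    have [c0|cn0] := eqVneq c 0.
      by apply: Ay; rewrite yE c0 scale0r addr0.
    apply: nu; exists c^-1.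
    have -> : u - c^-1 *: y = (- c^-1) *: h + 0.
      by rewrite yE scalerDr scalerA mulVf // scale1r addr0 scaleNr opprD addrCA subrr addr0.
    exact: Acl.
  split.
    by move=> x Ax; exists x, 0; rewrite scale0r addr0.
  move=> BA; have : B u by exists 0, 1; rewrite scale1r add0r.
  move=> /BA Au; apply: nu; exists 0; by rewrite scale0r subr0.
have Auniq : forall u c c', A (u - c *: y) -> A (u - c' *: y) -> c = c'.
  move=> u c c' h1 h2; apply/eqP; apply: contraT => ncc.
  have := Acl (-1) _ _ h1 h2.
  rewrite scaleN1r opprB addrA subrK -scalerBl => H.
  exfalso; apply: Ay; have := Acl (c - c')^-1 _ _ H A0.
  by rewrite addr0 scalerA mulVf ?scale1r // subr_eq0.
pose f := fun u => projT1 (cid (Adecomp u)).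
have fP : forall u, A (u - f u *: y) by move=> u; exact: (projT2 (cid (Adecomp u))).
have : f y = 1.
  apply: (Auniq y); first exact: fP.
  by rewrite scale1r subrr.
rewrite Hf ?oner_eq0 //.
  by move/eqP; rewrite eq_sym oner_eq0.
move=> a x z; apply: (Auniq (a *: x + z)); first exact: fP.
have -> : a *: x + z - (a * f x + f z) *: y = a *: (x - f x *: y) + (z - f z *: y).
  by rewrite scalerDl scalerBr scalerA opprD addrACA.
by apply: Acl; exact: fP.
Qed.
End Sep.


Lemma sum_single (V : zmodType) (s : seq int) (F : int -> V) k :
  uniq s -> (forall j, j \in s -> j != k -> F j = 0) -> (k \notin s -> F k = 0) ->
  \sum_(j <- s) F j = F k.
Proof.
move=> us H1 H2; have [ks|nks] := boolP (k \in s).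
  rewrite (bigD1_seq k) //= big1_seq ?addr0 // => j /andP[jk js]; exact: H1.
rewrite H2 // big1_seq // => j /andP[_ js]; apply: H1 => //; apply: contraNneq nks => <-; exact: js.
Qed.

Lemma sum_cover (V : zmodType) (s s' : seq int) (F : int -> V) :
  uniq s -> uniq s' -> (forall i, i \notin s -> F i = 0) ->
  (forall i, i \notin s' -> F i = 0) -> \sum_(i <- s) F i = \sum_(i <- s') F i.
Proof.
move=> us us' Hs Hs'.
rewrite (bigID (fun i => i \in s')) /= [X in _ + X]big1 ?addr0; last first.
  by move=> i /Hs'.
rewrite [RHS](bigID (fun i => i \in s)) /= [X in _ + X]big1 ?addr0; last first.
  by move=> i /Hs.
rewrite -big_filter -[in RHS]big_filter; apply: perm_big; apply: uniq_perm; rewrite ?filter_uniq //.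
by move=> i; rewrite !mem_filter andbC.
Qed.

Section G.
Variables (K : fieldType) (g : gradedLie K).
Local Notation br := (@lie_br K g).
Local Notation pr := (@gl_pr K g).

Lemma br0l y : br 0 y = 0.
Proof. by have := lie_brZl 0 0 y; rewrite !scale0r. Qed.

Lemma brl_sum (s : seq int) (F : int -> g) y :
  br (\sum_(i <- s) F i) y = \sum_(i <- s) br (F i) y.
Proof.
elim: s => [|i s IH]; first by rewrite !big_nil br0l.
by rewrite !big_cons lie_brDl IH.
Qed.

Lemma pr0 i : pr i 0 = 0.
Proof. by have := gl_prZ i 0 (0 : g); rewrite !scale0r. Qed.

Lemma pr_sum i (s : seq int) (F : int -> g) :
  pr i (\sum_(j <- s) F j) = \sum_(j <- s) pr i (F j).
Proof.
elim: s => [|j s IH]; first by rewrite !big_nil pr0.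
by rewrite !big_cons gl_prD IH.
Qed.

Lemma homog_pr i (x : g) : homog i (pr i x).
Proof. by rewrite /homog gl_prK eqxx. Qed.

Lemma homog_prE i j (x : g) : homog j x -> pr i x = if i == j then x else 0.
Proof. by move=> hx; rewrite -{1}hx gl_prK hx. Qed.

Lemma homog0 i : homog i (0 : g).
Proof. exact: pr0. Qed.

Lemma homog_uniq i j (x : g) : homog i x -> homog j x -> i != j -> x = 0.
Proof. by move=> hi hj ij; rewrite -hi (homog_prE _ hj) (negPf ij). Qed.

Lemma br_homog0 i (a : g) : homog i a -> br a 0 = 0.
Proof.
move=> ha; apply: (@homog_uniq (i + 0) (i + 1)).
- exact: gl_br_homog (homog0 _).
- exact: gl_br_homog (homog0 _).
by rewrite (inj_eq (addrI i)).
Qed.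

Lemma homog_inNp j (x : g) : 0 < j -> homog j x -> inNp x.
Proof.
move=> j0 hx i i0; rewrite (homog_prE _ hx); case: eqP => // ij.
by move: j0; rewrite -ij ltNge i0.
Qed.

Lemma homog_inNm j (x : g) : j < 0 -> homog j x -> inNm x.
Proof.
move=> j0 hx i i0; rewrite (homog_prE _ hx); case: eqP => // ij.
by move: j0; rewrite -ij ltNge i0.
Qed.

Definition supp (x : g) : seq int := projT1 (cid (gl_decomp x)).
Lemma suppP x : [/\ uniq (supp x), (forall i, i \notin supp x -> pr i x = 0)
  & x = \sum_(i <- supp x) pr i x].
Proof. exact: (projT2 (cid (gl_decomp x))). Qed.

Lemma decomp_any (x : g) (s : seq int) : uniq s -> (forall i, i \notin s -> pr i x = 0) ->
  x = \sum_(i <- s) pr i x.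
Proof.
move=> us hs; have [u1 h1 e1] := suppP x; rewrite {1}e1.
exact: sum_cover.
Qed.

End G.


Section Span.
Variables (K : fieldType) (W : lmodType K).
Inductive spanP (P : W -> Prop) : W -> Prop :=
| sp0 : spanP P 0
| spS a y u : P y -> spanP P u -> spanP P (a *: y + u).

Lemma spanP_in (P : W -> Prop) y : P y -> spanP P y.
Proof. by move=> Py; have := spS 1 Py (sp0 P); rewrite scale1r addr0. Qed.

Lemma spanP_lin (P : W -> Prop) a x y : spanP P x -> spanP P y -> spanP P (a *: x + y).
Proof.
move=> hx hy; elim: hx => [|b z u Pz _ IH]; first by rewrite scaler0 add0r.
rewrite scalerDr scalerA -addrA; exact: spS.
Qed.

Lemma spanP_add (P : W -> Prop) x y : spanP P x -> spanP P y -> spanP P (x + y).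
Proof. by move=> hx hy; rewrite -[x]scale1r; exact: spanP_lin. Qed.

Lemma spanP_scale (P : W -> Prop) a x : spanP P x -> spanP P (a *: x).
Proof. by move=> hx; rewrite -[_ *: _]addr0; apply: spanP_lin => //; exact: sp0. Qed.

Lemma spanP_mono (P Q : W -> Prop) u : (forall y, P y -> Q y) -> spanP P u -> spanP Q u.
Proof. by move=> PQ; elim=> [|a y w Py _ IH]; [exact: sp0 | apply: spS => //; exact: PQ]. Qed.

Lemma spanP_span (P : W -> Prop) u : spanP (spanP P) u -> spanP P u.
Proof. by elim=> [|a y w Py _ IH]; [exact: sp0 | exact: spanP_lin]. Qed.

Lemma spanP_zero (P : W -> Prop) u : (forall y, P y -> y = 0) -> spanP P u -> u = 0.
Proof. by move=> P0; elim=> // a y w /P0 -> _ ->; rewrite scaler0 addr0. Qed.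

Lemma spanP_sum (P : W -> Prop) (s : seq W) (c : 'I_(size s) -> K) :
  (forall y, y \in s -> P y) -> spanP P (\sum_(j < size s) c j *: s`_j).
Proof.
elim: s c => [|y s IH] c hs /=; first by rewrite big_ord0; exact: sp0.
rewrite big_ord_recl /=; apply: spS; first by apply: hs; rewrite inE eqxx.
apply: (IH (fun j => c (lift ord0 j))) => z zs; apply: hs; rewrite inE zs orbT. done.
Qed.
End Span.

Lemma spanP_map (K : fieldType) (W1 W2 : lmodType K) (P : W1 -> Prop) (Q : W2 -> Prop)
  (f : W1 -> W2) u :
  (forall a x y, f (a *: x + y) = a *: f x + f y) -> (forall y, P y -> spanP Q (f y)) ->
  spanP P u -> spanP Q (f u).
Proof.
move=> fl fPQ; have f0 : f 0 = 0.
  by have := fl 1 0 0; rewrite scaler0 addr0 scale1r => /(congr1 (fun z => z - f 0)); rewrite subrr addrK => ->.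
elim=> [|a y w Py _ IH]; first by rewrite f0; exact: sp0.
rewrite fl; apply: spanP_lin => //; exact: fPQ.
Qed.

Section Mod.
Variables (K : fieldType) (g : gradedLie K) (M : gModule g).
Local Notation br := (@lie_br K g).
Local Notation pr := (@gl_pr K g).
Local Notation act := (@gm_act K g M).

Lemma act0l m : act 0 m = 0.
Proof. by have := gm_actZl 0 0 m; rewrite !scale0r. Qed.
Lemma act0r x : act x 0 = 0.
Proof. by have := gm_actZr 0 x (0 : M); rewrite scaler0 scale0r. Qed.
Lemma actlin x a m n : act x (a *: m + n) = a *: act x m + act x n.
Proof. by rewrite gm_actDr gm_actZr. Qed.
Lemma actl_sum (I : Type) (s : seq I) (F : I -> g) m :
  act (\sum_(i <- s) F i) m = \sum_(i <- s) act (F i) m.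
Proof. elim: s => [|i s IH]; by rewrite ?big_nil ?act0l // !big_cons gm_actDl IH. Qed.
Lemma actr_sum (I : Type) (s : seq I) (F : I -> M) x :
  act x (\sum_(i <- s) F i) = \sum_(i <- s) act x (F i).
Proof. elim: s => [|i s IH]; by rewrite ?big_nil ?act0r // !big_cons gm_actDr IH. Qed.
Lemma act_comm x y m : act x (act y m) = act (br x y) m + act y (act x m).
Proof. by rewrite gm_act_br subrK. Qed.
Lemma act_anti x y m : act (br x y) m = - act (br y x) m.
Proof. by rewrite !gm_act_br opprB. Qed.
Lemma act_decomp x (s : seq int) m : uniq s -> (forall i, i \notin s -> pr i x = 0) ->
  act x m = \sum_(i <- s) act (pr i x) m.
Proof. by move=> us hs; rewrite {1}(decomp_any us hs) actl_sum. Qed.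
End Mod.


Section Verma.
Variables (K : fieldType) (g : gradedLie K) (chi : g -> K) (lam : K) (M : gModule g) (v : M).
Hypothesis hv : hw_vector chi lam v.
Local Notation br := (@lie_br K g).
Local Notation pr := (@gl_pr K g).
Local Notation act := (@gm_act K g M).

Lemma PBW0 x n u : homog 0 x -> unm_mono v n u -> spanP (unm_mono v n) (act x u).
Proof.
move=> hx; elim=> [|d n' y m d0 hy hm IH].
  rewrite (proj2 hv) //; apply: spanP_scale; apply: spanP_in; exact: unm_mono0.
rewrite act_comm; apply: spanP_add.
  apply: spanP_in; apply: unm_monoS => //; have := gl_br_homog hx hy; by rewrite add0r.
apply: (spanP_map (P := unm_mono v n')) => //; first by move=> *; exact: actlin.
by move=> w hw; apply: spanP_in; exact: unm_monoS.
Qed.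

Lemma Mdeg_span n m : Mdeg v n m -> spanP (unm_mono v n) m.
Proof. by move=> [s [hs [c ->]]]; exact: spanP_sum. Qed.

Lemma mono_zero n u : v = 0 -> unm_mono v n u -> u = 0.
Proof. by move=> v0; elim=> // d n' x m _ _ _ ->; rewrite act0r. Qed.

Definition Pos (u : M) := exists n, (0 < n)%N /\ unm_mono v n u.

Lemma Pos_act u : Pos u -> exists x m, u = act x m.
Proof. by move=> [n [n0 h]]; case: h n0 => // d n' x m *; exists x, m. Qed.

Section Sing.
Hypothesis irrM : irreducible M.
Hypothesis KEY : spanP Pos v -> v = 0.
Hypothesis v0 : v <> 0.
Variables (n : nat) (m : M).
Hypothesis n0 : (0 < n)%N.
Hypothesis hm : spanP (unm_mono v n) m.
Hypothesis sing : forall (j : int) x, 0 < j -> homog j x -> act x m = 0.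

Inductive Tgen : M -> Prop :=
| T0 : Tgen m
| TS k y u : k <= 0 -> homog k y -> Tgen u -> Tgen (act y u).

Lemma spanP_bigsum (P : M -> Prop) (s : seq int) (F : int -> M) :
  (forall i, spanP P (F i)) -> spanP P (\sum_(i <- s) F i).
Proof.
move=> hF; elim: s => [|i s IH]; first by rewrite big_nil; exact: sp0.
by rewrite big_cons; apply: spanP_add.
Qed.

Lemma Tgen_act u : Tgen u -> forall j x, homog j x -> spanP Tgen (act x u).
Proof.
elim=> [|k y u' hk hy Tu IH] j x hx.
  case: (ltrP 0 j) => hj; first by rewrite (sing hj hx); exact: sp0.
  by apply: spanP_in; apply: TS hj hx T0.
case: (ltrP 0 j) => hj; last by apply: spanP_in; apply: TS hj hx (TS hk hy Tu).
rewrite act_comm; apply: spanP_add; first exact: (IH _ _ (gl_br_homog hx hy)).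
apply: (spanP_map (P := Tgen)) (IH _ _ hx) => //; first by move=> *; exact: actlin.
by move=> w hw; apply: spanP_in; exact: TS hk hy hw.
Qed.

Lemma S_act u x : spanP Tgen u -> spanP Tgen (act x u).
Proof.
move=> hu; apply: (spanP_map (P := Tgen)) hu; first by move=> *; exact: actlin.
move=> w hw; have [us hs _] := suppP x.
rewrite (act_decomp w us hs); apply: spanP_bigsum => i.
exact: Tgen_act hw _ _ (homog_pr _ _).
Qed.

Lemma Tgen_Pos u : Tgen u -> spanP Pos u.
Proof.
elim=> [|k y u' hk hy _ IH].
  apply: spanP_mono hm => w hw; by exists n.
apply: (spanP_map (P := Pos)) IH; first by move=> *; exact: actlin.
move=> w [n' [n'0 hw]]; have [k0|kn] := eqVneq k 0.
  rewrite k0 in hy; apply: spanP_mono (PBW0 hy hw) => z hz; by exists n'.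
apply: spanP_in; exists (n' + `|k|)%N; split; first by rewrite addn_gt0 n'0.
apply: unm_monoS => //; first by rewrite absz_gt0.
suff -> : - (`|k|%N%:Z) = k by [].
by rewrite abszE ler0_norm // opprK.
Qed.

Lemma singular_zero : m = 0.
Proof.
apply: contrapT => mn0.
have subS : submodule (spanP Tgen).
  split; [exact: sp0 | by move=> *; exact: spanP_lin | by move=> x w; exact: S_act].
have Sv : spanP Tgen v.
  apply: (proj2 irrM) subS _ v; exists m; split => //; apply: spanP_in; exact: T0.
apply: v0; apply: KEY; apply: spanP_span; apply: (spanP_mono _ Sv) => w; exact: Tgen_Pos.
Qed.
End Sing.
End Verma.


Section Ker.
Variables (K : fieldType) (g : gradedLie K) (chi : g -> K) (lam : K) (M : gModule g) (v : M).
Hypothesis hv : hw_vector chi lam v.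
Hypothesis hchi : nonsingular_character chi.
Hypothesis lam0 : lam != 0.
Hypothesis v0 : v != 0.
Local Notation br := (@lie_br K g).
Local Notation pr := (@gl_pr K g).
Local Notation act := (@gm_act K g M).

Definition kerM (z : g) := forall m, act z m = 0.

Lemma hw_deg0 h : homog 0 h -> act h v = 0 -> chi h = 0.
Proof.
move=> hh; rewrite (proj2 hv) // => /eqP; rewrite scaler_eq0 (negPf v0) orbF mulf_eq0.
by rewrite (negPf lam0) /= => /eqP.
Qed.

Lemma hw_pos j x : 0 < j -> homog j x -> act x v = 0.
Proof. by move=> j0 hx; apply: (proj1 hv); exact: homog_inNp hx. Qed.

Lemma actNl x m : act (- x) m = - act x m.
Proof. by rewrite -scaleN1r gm_actZl scaleN1r. Qed.
Lemma actBl x y m : act (x - y) m = act x m - act y m.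
Proof. by rewrite gm_actDl actNl. Qed.
Lemma prN i x : pr i (- x) = - pr i x.
Proof. by rewrite -scaleN1r gl_prZ scaleN1r. Qed.
Lemma chiB x y : chi (x - y) = chi x - chi y.
Proof.
have [c1 _ _ _ _] := hchi.
have := c1 (-1) y x; rewrite scaleN1r mulN1r addrC => ->; by rewrite addrC.
Qed.

Lemma br0l' y : br 0 y = 0. Proof. exact: br0l. Qed.

Lemma ker_neg_core z k : kerM z -> k < 0 -> (forall j, j < k -> pr j z = 0) -> pr k z = 0.
Proof.
move=> kz k0 low.
have [_ _ _ _ c5] := hchi.
have [us hs _] := suppP z.
have stepa : forall e, homog (- k) e -> chi (br e (pr k z)) = 0.
  move=> e he.
  have hk0 : homog 0 (br e (pr k z)) by have := gl_br_homog he (homog_pr k z); rewrite addNr.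
  apply: hw_deg0 => //.
  have : \sum_(j <- supp z) act (br e (pr j z)) v = 0.
    under eq_bigr do rewrite gm_act_br.
    rewrite sumrB -actr_sum -act_decomp // kz act0r.
    by rewrite -(act_decomp _ us hs) kz subrr.
  rewrite (sum_single (k := k)) //.
    move=> j js jk; case: (ltrgtP j k) => [jlt|jgt|]; last by move/eqP: jk.
      by rewrite low // (br_homog0 he) act0l.
    apply: (@hw_pos (- k + j)); last exact: gl_br_homog he (homog_pr _ _).
    by rewrite addrC subr_gt0.
  by move=> /hs ->; rewrite (br_homog0 he) act0l.
apply: c5; first exact: homog_inNm (homog_pr k z).
move=> u hu.
have [uu hsu _] := suppP u.
rewrite {1}(decomp_any uu hsu) brl_sum pr_sum.
rewrite (sum_single (k := - k)) //.
- rewrite (homog_prE _ (gl_br_homog (homog_pr _ _) (homog_pr _ _))) addNr eqxx.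
  exact: stepa (homog_pr _ _).
- move=> i _ ik; rewrite (homog_prE _ (gl_br_homog (homog_pr _ _) (homog_pr _ _))).
  case: eqP => // /eqP; rewrite eq_sym addr_eq0 => /eqP ik'; by rewrite ik' eqxx in ik.
- by move=> /hsu ->; rewrite br0l pr0.
Qed.

Lemma ker_neg z : kerM z -> forall k, k < 0 -> pr k z = 0.
Proof.
move=> kz; have [us hs _] := suppP z.
pose B := (\sum_(i <- supp z) `|i|).+1.
have bnd : forall k, (B <= `|k|)%N -> pr k z = 0.
  move=> k kB; apply: hs; apply: contraTN kB => ks; rewrite -ltnNge ltnS.
  by rewrite (bigD1_seq k) //= leq_addr.
suff Q : forall n k, k < 0 -> (B - n <= `|k|)%N -> pr k z = 0.
  by move=> k k0; apply: (Q B) => //; rewrite subnn.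
elim=> [|n IH] k k0 kb; first by apply: bnd; rewrite subn0 in kb.
apply: ker_neg_core => // j jk; apply: IH; lia.
Qed.

Lemma ker_chi0 z : kerM z -> chi (pr 0 z) = 0.
Proof.
move=> kz; have [us hs _] := suppP z.
apply: hw_deg0; first exact: homog_pr.
rewrite -(kz v) (act_decomp _ us hs) (sum_single (k := 0)) //.
  move=> j _ j0; case: (ltrgtP j 0) => [jl|jg|]; last by move/eqP: j0.
    by rewrite ker_neg // act0l.
  by rewrite (hw_pos jg (homog_pr _ _)).
by move=> /hs ->; rewrite act0l.
Qed.

Lemma ker_pos_core z d : kerM z -> 0 < d -> pr d z = 0.
Proof.
move=> kz d0.
have [_ _ _ c4 _] := hchi.
have [us hs _] := suppP z.
have stepa : forall y, homog (- d) y -> chi (br (pr d z) y) = 0.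
  move=> y hy.
  have hk0 : homog 0 (br (pr d z) y) by have := gl_br_homog (homog_pr d z) hy; rewrite addrN.
  apply: hw_deg0 => //.
  have : \sum_(j <- supp z) act (br (pr j z) y) v = 0.
    under eq_bigr do rewrite gm_act_br.
    rewrite sumrB -(act_decomp _ us hs) kz -actr_sum -(act_decomp _ us hs) kz act0r.
    by rewrite subrr.
  have kz2 : kerM (\sum_(i <- supp z) br y (pr i z)).
    move=> m; rewrite actl_sum; under eq_bigr do rewrite gm_act_br.
    by rewrite sumrB -actr_sum -!(act_decomp _ us hs) kz act0r kz subrr.
  rewrite (sum_single (k := d)) //.
    move=> j js jd; case: (ltrgtP j d) => [jlt|jgt|]; last by move/eqP: jd.
      rewrite act_anti.
      have : pr (j - d) (\sum_(i <- supp z) br y (pr i z)) = br y (pr j z).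
        rewrite pr_sum (sum_single (k := j)) //.
        + by rewrite (homog_prE _ (gl_br_homog hy (homog_pr _ _))) addrC eqxx.
        + move=> i _ ij; rewrite (homog_prE _ (gl_br_homog hy (homog_pr _ _))).
          by case: eqP => // /eqP; rewrite addrC (inj_eq (addrI _)) eq_sym (negPf ij).
        + by rewrite js.
      rewrite ker_neg //; last by rewrite subr_lt0.
      by move=> <-; rewrite act0l oppr0.
    apply: (@hw_pos (j + - d)); last exact: gl_br_homog (homog_pr _ _) hy.
    by rewrite subr_gt0.
  by move=> /hs ->; rewrite br0l act0l.
apply: c4; first exact: homog_inNp (homog_pr d z).
move=> w hw.
have [uw hsw _] := suppP w.
pose z' := br (pr d z) w - \sum_(j <- supp w) br (pr d z) (pr j w).
have kz' : kerM z'.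
  move=> m; rewrite actBl actl_sum gm_act_br; under eq_bigr do rewrite gm_act_br.
  by rewrite sumrB -actr_sum -!(act_decomp _ uw hsw) subrr.
have := ker_chi0 kz'; rewrite /z' gl_prD prN pr_sum chiB.
rewrite (sum_single (k := - d)) //.
- rewrite (homog_prE _ (gl_br_homog (homog_pr _ _) (homog_pr _ _))) addrN eqxx.
  by rewrite (stepa _ (homog_pr _ _)) subr0.
- move=> i _ ik; rewrite (homog_prE _ (gl_br_homog (homog_pr _ _) (homog_pr _ _))).
  case: eqP => // /eqP; rewrite eq_sym addr_eq0 => /eqP ik'. by rewrite ik' opprK eqxx in ik.
- by move=> /hsw ->; rewrite (br_homog0 (homog_pr _ _)) pr0.
Qed.

Lemma ker_graded z k : kerM z -> k != 0 -> pr k z = 0.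
Proof.
move=> kz; case: (ltrgtP k 0) => // [kl|kg] _; first exact: ker_neg.
exact: ker_pos_core.
Qed.
End Ker.


Section Eigen.
Variables (K : fieldType) (W : lmodType K) (F : W -> W).
Hypothesis Flin : forall a x y, F (a *: x + y) = a *: F x + F y.

Lemma F0 : F 0 = 0.
Proof.
by have := Flin 1 0 0; rewrite scaler0 addr0 scale1r => /(congr1 (fun z => z - F 0)); rewrite subrr addrK => <-.
Qed.
Lemma FZ a x : F (a *: x) = a *: F x.
Proof. by have := Flin a x 0; rewrite !addr0 F0 addr0. Qed.

Definition Gop (es : seq K) (u : W) := foldr (fun c w => F w - c *: w) u es.

Lemma Gop_lin es a x y : Gop es (a *: x + y) = a *: Gop es x + Gop es y.
Proof.
elim: es => [//|e es IH] /=; rewrite IH Flin scalerDr scalerA mulrC -scalerA.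
by rewrite opprD addrACA scalerBr.
Qed.

Lemma Gop_eig es c y : F y = c *: y -> Gop es y = (\prod_(e <- es) (c - e)) *: y.
Proof.
move=> Fy; elim: es => [|e es IH] /=; first by rewrite big_nil scale1r.
by rewrite IH FZ Fy big_cons scalerA scalerA -scalerBl mulrBl mulrC.
Qed.

Lemma eigen_fix u : spanP (fun y => exists c, c != 1 /\ F y = c *: y) u -> F u = u -> u = 0.
Proof.
move=> hu Fu.
have [es [ne1 G0]] : exists es, all (fun e => e != 1) es /\ Gop es u = 0.
  elim: hu {Fu} => [|a y w [c [c1 Fy]] _ [es [ne G0]]].
    exists [::]; split => //.
  exists (c :: es); split; first by rewrite /= c1.
  rewrite /= Gop_lin G0 addr0 (Gop_eig _ Fy) scalerA FZ Fy scalerA.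
  by rewrite [X in _ - X]scalerA mulrC subrr.
move: G0; rewrite (@Gop_eig es 1 u); last by rewrite scale1r.
move/eqP; rewrite scaler_eq0 => /orP[|/eqP //].
rewrite prodf_seq_eq0 => /hasP[e ees /= /eqP]; move: ne1 => /allP /(_ e ees).
by move=> ne /eqP; rewrite subr_eq0 eq_sym (negPf ne).
Qed.
End Eigen.


Section Twist.
Variables (K : numFieldType) (g : gradedLie K) (chi : g -> K) (lam : K) (M : gModule g) (v : M).
Hypothesis hv : hw_vector chi lam v.
Hypothesis hchi : nonsingular_character chi.
Hypothesis lam0 : lam != 0.
Hypothesis v0 : v != 0.
Local Notation br := (@lie_br K g).
Local Notation pr := (@gl_pr K g).
Local Notation act := (@gm_act K g M).

Let t : K := 2.
Lemma t0 : t != 0. Proof. by rewrite /t pnatr_eq0. Qed.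

Definition tact (x : g) (m : M) : M := \sum_(i <- supp x) (t ^ i) *: act (pr i x) m.

Lemma tactE x (s : seq int) m : uniq s -> (forall i, i \notin s -> pr i x = 0) ->
  tact x m = \sum_(i <- s) (t ^ i) *: act (pr i x) m.
Proof.
move=> us hs; have [ux hx _] := suppP x; rewrite /tact; apply: sum_cover => // i.
  by move=> /hx ->; rewrite act0l scaler0.
by move=> /hs ->; rewrite act0l scaler0.
Qed.

Lemma tact_homog k x m : homog k x -> tact x m = t ^ k *: act x m.
Proof.
move=> hx; rewrite (@tactE x [:: k]) // ?big_seq1 ?hx //.
by move=> i; rewrite inE => ik; rewrite (homog_prE _ hx) (negPf ik).
Qed.

Lemma tact_pr i x m : tact (pr i x) m = t ^ i *: act (pr i x) m.
Proof. exact: tact_homog (homog_pr _ _). Qed.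

Lemma tact_Dl x y m : tact (x + y) m = tact x m + tact y m.
Proof.
have [ux hx _] := suppP x; have [uy hy _] := suppP y.
set s := undup (supp x ++ supp y).
have us : uniq s by exact: undup_uniq.
have sx : forall i, i \notin s -> pr i x = 0.
  by move=> i; rewrite mem_undup mem_cat negb_or => /andP[/hx].
have sy : forall i, i \notin s -> pr i y = 0.
  by move=> i; rewrite mem_undup mem_cat negb_or => /andP[_ /hy].
rewrite (tactE _ us sx) (tactE _ us sy) (@tactE (x + y) s) //; last first.
  by move=> i hi; rewrite gl_prD sx ?sy ?addr0.
by rewrite -big_split /=; apply: eq_bigr => i _; rewrite gl_prD gm_actDl scalerDr.
Qed.

Lemma tact_Zl a x m : tact (a *: x) m = a *: tact x m.
Proof.
have [ux hx _] := suppP x.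
rewrite (@tactE (a *: x) (supp x)) //; last by move=> i /hx; rewrite gl_prZ => ->; rewrite scaler0.
rewrite /tact scaler_sumr; apply: eq_bigr => i _.
by rewrite gl_prZ gm_actZl !scalerA mulrC.
Qed.

Lemma tact_Dr x m n : tact x (m + n) = tact x m + tact x n.
Proof. by rewrite /tact -big_split; apply: eq_bigr => i _; rewrite gm_actDr scalerDr. Qed.

Lemma tact_Zr a x m : tact x (a *: m) = a *: tact x m.
Proof.
rewrite /tact scaler_sumr; apply: eq_bigr => i _.
by rewrite gm_actZr !scalerA mulrC.
Qed.

Lemma tact0 m : tact 0 m = 0.
Proof. by rewrite (@tactE 0 [::]) ?big_nil // => i _; rewrite pr0. Qed.

Lemma tact_sum (I : Type) (l : seq I) (F : I -> g) m :
  tact (\sum_(p <- l) F p) m = \sum_(p <- l) tact (F p) m.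
Proof. elim: l => [|p l IH]; by rewrite ?big_nil ?tact0 // !big_cons tact_Dl IH. Qed.

Lemma tactr_sum (I : Type) (l : seq I) (F : I -> M) x :
  tact x (\sum_(p <- l) F p) = \sum_(p <- l) tact x (F p).
Proof.
elim: l => [|p l IH]; last by rewrite !big_cons tact_Dr IH.
by rewrite !big_nil /tact big1 // => i _; rewrite act0r scaler0.
Qed.

Lemma tact_br x y m : tact (br x y) m = tact x (tact y m) - tact y (tact x m).
Proof.
have [ux hx _] := suppP x; have [uy hy _] := suppP y.
set W := \sum_(i <- supp x) \sum_(j <- supp y) br (pr i x) (pr j y).
set Z := br x y - W.
have kZ : kerM M Z.
  move=> m'; rewrite actBl /W actl_sum.
  under eq_bigr do rewrite actl_sum.
  under eq_bigr do under eq_bigr do rewrite gm_act_br.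
  under eq_bigr do rewrite sumrB.
  rewrite sumrB gm_act_br.
  under eq_bigr do rewrite -actr_sum -(act_decomp _ uy hy).
  rewrite -(act_decomp _ ux hx).
  under eq_bigr do rewrite -(act_decomp _ uy hy).
  by rewrite -actr_sum -(act_decomp _ ux hx) subrr.
have hZ : homog 0 Z.
  have [uz hz ez] := suppP Z; rewrite /homog {2}ez (sum_single (k := 0)) //.
    by move=> j _ j0; rewrite (ker_graded hv hchi lam0 v0 kZ j0).
  by move=> /hz.
have -> : br x y = Z + W by rewrite /Z subrK.
rewrite tact_Dl (tact_homog _ hZ) kZ scaler0 add0r /W tact_sum.
under eq_bigr do rewrite tact_sum.
under eq_bigr do under eq_bigr do rewrite (tact_homog _ (gl_br_homog (homog_pr _ _) (homog_pr _ _))).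
have Ex : forall w, tact x w = \sum_(i <- supp x) tact (pr i x) w.
  by move=> w; rewrite {1}(decomp_any ux hx) tact_sum.
have Ey : forall w, tact y w = \sum_(i <- supp y) tact (pr i y) w.
  by move=> w; rewrite {1}(decomp_any uy hy) tact_sum.
rewrite !Ex !Ey.
under [X in _ = X - _]eq_bigr do rewrite tactr_sum.
under [X in _ = _ - X]eq_bigr do rewrite tactr_sum.
rewrite [X in _ = _ - X]exchange_big /= -sumrB; apply: eq_bigr => i _.
rewrite -sumrB; apply: eq_bigr => j _.
rewrite !tact_pr !gm_actZr !scalerA.
by rewrite gm_act_br scalerBr expfzDr ?t0 // [t ^ j * _]mulrC.
Qed.

Definition Mt : gModule g := @GModule K g M tact tact_Dl tact_Zl tact_Dr tact_Zr tact_br.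

Lemma hw_Mt : hw_vector chi lam (v : Mt).
Proof.
split.
  move=> x hx /=; rewrite /tact big1 // => i _.
  case: (lerP i 0) => hi; first by rewrite hx // act0l scaler0.
  by rewrite (proj1 hv) ?scaler0 //; exact: homog_inNp (homog_pr _ _).
by move=> h hh /=; rewrite (tact_homog _ hh) expr0z scale1r (proj2 hv).
Qed.

Lemma t_ne1 n : (0 < n)%N -> t ^ (- (n%:Z)) != 1.
Proof.
move=> n0; rewrite -exprnN invr_eq1 /t -natrX pnatr_eq1.
by case: n n0 => // n _; rewrite expnS; lia.
Qed.

Lemma KEY_twist : is_gen_verma chi lam v -> spanP (Pos v) v -> v = 0.
Proof.
move=> [_ univ] hP.
have [F [[Flin Fact] Fv _]] := univ Mt v hw_Mt.
have Fmono : forall n u, unm_mono v n u -> F u = t ^ (- (n%:Z)) *: u.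
  move=> n u; elim=> [|d n' x m _ hx _ IH]; first by rewrite Fv expr0z scale1r.
  rewrite Fact /= IH tact_Zr (tact_homog _ hx) !scalerA -expfzDr ?t0 //.
  by rewrite PoszD opprD addrC.
apply: (eigen_fix Flin); last by rewrite Fv.
apply: spanP_mono hP => u [n [n0 hu]]; exists (t ^ (- (n%:Z))); split.
  exact: t_ne1.
exact: Fmono.
Qed.
End Twist.


Section Triv.
Variables (K : fieldType) (g : gradedLie K).
Definition Triv : gModule g :=
  @GModule K g (K^o) (fun _ _ => 0) (fun _ _ _ => esym (addr0 0))
    (fun a _ _ => esym (scaler0 _ a)) (fun _ _ _ => esym (addr0 0))
    (fun a _ _ => esym (scaler0 _ a)) (fun _ _ _ => esym (subrr 0)).
End Triv.

Section Key0.
Variables (K : fieldType) (g : gradedLie K) (chi : g -> K) (M : gModule g) (v : M).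
Lemma KEY_triv : is_gen_verma chi 0 v -> spanP (Pos v) v -> v = 0.
Proof.
move=> [_ univ] hP.
have hw : hw_vector chi 0 (1 : Triv g).
  by split => // h _ /=; rewrite mul0r scale0r.
have [F [[Flin Fact] Fv _]] := univ (Triv g) 1 hw.
have FP : forall u, spanP (Pos v) u -> F u = 0.
  move=> u; elim=> [|a y w hy _ IH].
    by have := Flin 1 0 0; rewrite scaler0 addr0 scale1r => /(congr1 (fun z => z - F 0)); rewrite subrr addrK => <-.
  rewrite Flin IH addr0; have [x [m ->]] := Pos_act hy; by rewrite Fact scaler0.
by move: (FP _ hP); rewrite Fv => /eqP; rewrite oner_eq0.
Qed.
End Key0.


Lemma linf0 (K : fieldType) (W : lmodType K) (f : W -> K) : linf f -> f 0 = 0.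
Proof.
move=> fl; have := fl 1 0 0; rewrite scaler0 addr0 mul1r => /(congr1 (fun z => z - f 0)).
by rewrite subrr addrK => <-.
Qed.

Lemma linf_sum (K : fieldType) (W : lmodType K) (f : W -> K) (T : Type) (l : seq T)
  (a : T -> K) (x : T -> W) : linf f ->
  f (\sum_(p <- l) a p *: x p) = \sum_(p <- l) a p * f (x p).
Proof.
move=> fl; elim: l => [|p l IH]; first by rewrite !big_nil linf0.
by rewrite !big_cons fl IH.
Qed.

Lemma linfB (K : fieldType) (W : lmodType K) (f : W -> K) x y : linf f -> f (x - y) = f x - f y.
Proof.
move=> fl; rewrite [x - y]addrC; have := fl (-1) y x; rewrite scaleN1r mulN1r => ->; by rewrite addrC.
Qed.

Section Main.
Variables (K : numFieldType) (g : gradedLie K) (chi : g -> K) (lam : K) (M : gModule g) (v : M).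
Variables (V : gModule g) (w : V).
Hypothesis hchi : nonsingular_character chi.
Hypothesis hgv : is_gen_verma chi lam v.
Hypothesis irrM : irreducible M.
Local Notation br := (@lie_br K g).
Local Notation pr := (@gl_pr K g).
Local Notation act := (@gm_act K g M).

Definition Ev (phi : V -> K) (t : seq (M * V)) : M := \sum_(p <- t) phi p.2 *: p.1.

Lemma tens_eq_E t1 t2 : tens_eq t1 t2 <-> forall phi, linf phi -> Ev phi t1 = Ev phi t2.
Proof.
split.
  move=> h phi hphi; apply/eqP; rewrite -subr_eq0; apply/eqP; apply: sep => f hf.
  rewrite linfB // /Ev !linf_sum //.
  have e : forall t, \sum_(p <- t) phi p.2 * f p.1 = phi (tens_eval f t).
    by move=> t; rewrite /tens_eval linf_sum //; apply: eq_bigr => p _; rewrite mulrC.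
  by rewrite !e h // subrr.
move=> h f hf; apply/eqP; rewrite -subr_eq0; apply/eqP; apply: sep => phi hphi.
rewrite linfB // /tens_eval !linf_sum //.
have e : forall t, \sum_(p <- t) f p.1 * phi p.2 = f (Ev phi t).
  by move=> t; rewrite /Ev linf_sum //; apply: eq_bigr => p _; rewrite mulrC.
by rewrite !e h // subrr.
Qed.

Lemma KEY : spanP (Pos v) v -> v = 0.
Proof.
move=> hP; have [->|v0] := eqVneq v 0; first by [].
have [l0|l0] := eqVneq lam 0.
  by move: hgv; rewrite l0 => hgv0; exact: KEY_triv hgv0 hP.
exact: (KEY_twist (proj1 hgv) hchi l0 v0 hgv hP).
Qed.

Lemma zc_eq (z1 z2 : nat -> seq (M * V)) n : (0 < n)%N ->
  (forall m, (m < n)%N -> tens_eq (z1 m) (z2 m)) ->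
  forall k : int, - (n%:Z) < k -> tens_eq (zc z1 k) (zc z2 k).
Proof.
move=> n0 IH [[|k']|k] /= hk.
- exact: IH.
- by [].
- apply: IH; move: hk; rewrite NegzE; lia.
Qed.

Lemma E_act_comp phi (z : nat -> seq (M * V)) x j k : homog j x ->
  Ev phi (act_comp x [:: j] z k) =
  act x (Ev phi (zc z (k - j))) + Ev (fun y => phi (gm_act x y)) (zc z k).
Proof.
move=> hx; rewrite /act_comp /= cats0 /Ev big_cat !big_map /= hx actr_sum.
by congr (_ + _); apply: eq_bigr => p _; rewrite gm_actZr.
Qed.

Theorem main (z1 z2 : nat -> seq (M * V)) :
    in_ctens v z1 -> ctens_invariant z1 -> leading_term v w z1 ->
    in_ctens v z2 -> ctens_invariant z2 -> leading_term v w z2 ->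
    forall n : nat, tens_eq (z1 n) (z2 n).
Proof.
move=> c1 i1 l1 c2 i2 l2.
have [v0|v0] := eqVneq v 0.
  have zero : forall z : nat -> seq (M * V), in_ctens v z -> forall n f, lin_functional f -> tens_eval f (z n) = 0.
    move=> z cz n f hf; rewrite /tens_eval big1_seq // => p /= pz.
    have := Mdeg_span (cz n p pz); move/(spanP_zero _) => ->.
      by rewrite (linf0 hf) scale0r.
    by move=> y; exact: mono_zero.
  by move=> n f hf; rewrite !zero.
elim/ltn_ind => n IH.
case: n IH => [|n] IH.
  by move=> f hf; rewrite l1 // l2.
apply/tens_eq_E => phi hphi.
apply/eqP; rewrite -subr_eq0; apply/eqP.
set D := Ev phi (z1 n.+1) - Ev phi (z2 n.+1).
have spanD : forall z : nat -> seq (M * V), in_ctens v z -> spanP (unm_mono v n.+1) (Ev phi (z n.+1)).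
  move=> z cz; rewrite /Ev; elim: (z n.+1) (cz n.+1) => [|p l IHl] hl.
    by rewrite big_nil; exact: sp0.
  rewrite big_cons; apply: spanP_lin; last by apply: IHl => q ql; apply: hl; rewrite inE ql orbT.
  by apply: Mdeg_span; apply: hl; rewrite inE eqxx.
have v0' : v <> 0 by apply/eqP.
apply: (singular_zero (proj1 hgv) irrM KEY v0' (n := n.+1)) => //.
  by rewrite /D -scaleN1r addrC; apply: spanP_lin; apply: spanD.
move=> j x j0 hx.
have hs : forall i, i \notin [:: j] -> pr i x = 0.
  by move=> i; rewrite inE => ij; rewrite (homog_prE _ hx) (negPf ij).
have E1 := proj1 (tens_eq_E _ _) (i1 x [:: j] erefl hs (j - n.+1%:Z)) phi hphi.
have E2 := proj1 (tens_eq_E _ _) (i2 x [:: j] erefl hs (j - n.+1%:Z)) phi hphi.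
rewrite !E_act_comp // in E1 E2.
have e : j - n.+1%:Z - j = - (n.+1%:Z) by rewrite addrC addKr.
have Ev0 : Ev phi [::] = 0 by rewrite /Ev big_nil.
rewrite e -NegzE /= Ev0 in E1 E2.
have hpsi : linf (fun y => phi (gm_act x y)).
  by move=> a p q; rewrite gm_actDr gm_actZr hphi.
have hk : - (n.+1%:Z) < j + Negz n by rewrite NegzE; lia.
have Epsi := proj1 (tens_eq_E _ _) (zc_eq (ltn0Sn n) IH hk) _ hpsi.
move/eqP: E1; rewrite addr_eq0 => /eqP E1.
move/eqP: E2; rewrite addr_eq0 => /eqP E2.
rewrite /D gm_actDr -scaleN1r gm_actZr E1 E2 Epsi scaleN1r opprK.
by rewrite addrC subrr.
Qed.

End Main.


End Aux.

Theorem proposition4p1 (R : realType) (g : gradedLie R[i]) (chi : g -> R[i])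
  (lam : R[i]) (M : gModule g) (v : M) (V : gModule g) (w : V) :
  nonsingular_character chi ->
  is_gen_verma chi lam v ->
  irreducible M ->
  forall z1 z2 : nat -> seq (M * V),
    in_ctens v z1 -> ctens_invariant z1 -> leading_term v w z1 ->
    in_ctens v z2 -> ctens_invariant z2 -> leading_term v w z2 ->
    forall n : nat, tens_eq (z1 n) (z2 n).
Proof.
move=> hchi hgv irrM z1 z2; exact: (@Aux.main _ g chi lam M v V w hchi hgv irrM z1 z2).
Qed.
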